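(* Let ${\mathscr X}$ be a Hausdorff space and consider the set $M^1({\mathscr X})$ of Radon probability measures on ${\mathscr X}$ with the weak topology; assume $M^1({\mathscr X})$ is Hausdorff and that $P\mapsto P(A)$ is Borel measurable on $M^1({\mathscr X})$ for every Borel $A\subset{\mathscr X}$. Let $\Pi$ be a Borel probability measure on $M^1({\mathscr X})$ and let $G$ be its mean measure. Then $\{P\in M^1({\mathscr X}):P\ll G\}$ is closed in $M^1({\mathscr X})$ and the (weak) support of $\Pi$ satisfies $${\mathrm{supp}}(\Pi)\subset\{P\in M^1({\mathscr X}):P\ll G\}.$$
   Context: The weak topology on $M^1({\mathscr X})$ is the coarsest topology making $P\mapsto\int h\,dP$ continuous for every bounded Borel measurable $h:{\mathscr X}\to\mathbb{R}$. The mean measure of $\Pi$ is the Borel probability measure $G(A)=\int_{M^1({\mathscr X})}P(A)\,d\Pi(P)$. The support of $\Pi$ is the set of $P$ all of whose open neighbourhoods have positive $\Pi$-mass. *)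

(* Defs.v *)
From HB Require Import structures.
From mathcomp Require Import all_boot all_order all_algebra.
From mathcomp Require Import all_classical all_reals all_analysis.
From mathcomp Require Import measurable_realfun.
Set Implicit Arguments. Unset Strict Implicit. Unset Printing Implicit Defensive.
Import Order.TTheory GRing.Theory Num.Theory.
Import numFieldTopology.Exports numFieldNormedType.Exports.
Local Open Scope classical_set_scope.
Local Open Scope ring_scope.

Section WeakM1.
Context (R : realType) (X : ptopologicalType).

Definition borelX : Type := g_sigma_algebraType (@open X).

(* Radon probability measure: inner regular w.r.t. compact sets.
   (Local finiteness is automatic for a finite measure.  In the Hausdorff
   setting of the theorem, compact sets are closed hence Borel.) *)
Definition radon (P : probability borelX R) : Prop :=
  forall A : set borelX, measurable A ->
    P A = ereal_sup [set P K | K in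
      [set K : set borelX | compact (K : set X) /\ K `<=` A]].

Lemma dirac_radon (x : X) : radon (\d_(x : borelX) : probability borelX R).
Proof.
move=> A mA /=; apply: le_anti; apply/andP; split.
  have [Ax|nAx] := pselect (A x).
    apply: (@le_trans _ _ (\d_(x : borelX) [set x] : \bar R)).
      by rewrite !diracE (mem_set Ax) mem_set.
    apply: ereal_sup_ubound; exists [set x] => //; split.
    - exact: compact_set1.
    - by move=> y ->.
  apply: (@le_trans _ _ (\d_(x : borelX) set0 : \bar R)).
    by rewrite !diracE memNset// in_set0.
  apply: ereal_sup_ubound; exists set0 => //; split; [exact: compact0|by []].
apply: ge_ereal_sup => _ [K [_ KA] <-]; rewrite !diracE.
by case: (boolP (x \in K)) => [/set_mem/KA/mem_set ->|_] //; rewrite lee_fin.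
Qed.

Definition M1 : Type := {P : probability borelX R | radon P}.
HB.instance Definition _ := gen_eqMixin M1.
HB.instance Definition _ := gen_choiceMixin M1.
HB.instance Definition _ :=
  isPointed.Build M1 (exist _ _ (dirac_radon point)).

Definition bmfun : Type := {h : borelX -> R |
  measurable_fun setT h /\ exists M : R, forall x, `|h x| <= M}.

Definition integ (h : bmfun) (P : M1) : R :=
  fine (\int[sval P]_x ((sval h x)%:E)).

Definition weakM1 : Type :=
  sup_topology (fun h : bmfun => Topological.class (initial_topology (integ h))).

Definition borelM1 : Type := g_sigma_algebraType (@open weakM1).

Definition mean_measure (Pi : probability borelM1 R) : set borelX -> \bar R :=
  fun A => (\int[Pi]_(P in setT) ((sval (P : M1)) A))%E.

Definition supp (Pi : probability borelM1 R) : set weakM1 :=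
  [set P | forall U : set weakM1, open U -> U P -> (0 < Pi U)%E].

End WeakM1.

(* Main.v *)
Require Import Defs.
From HB Require Import structures.
From mathcomp Require Import all_boot all_order all_algebra.
From mathcomp Require Import all_classical all_reals all_analysis.
From mathcomp Require Import measurable_realfun.
Import Order.TTheory GRing.Theory Num.Theory.
Import numFieldTopology.Exports numFieldNormedType.Exports.
Local Open Scope classical_set_scope.
Local Open Scope ring_scope.
Lemma integ_cont (R : realType) (X : ptopologicalType) (h : bmfun R X) :
  continuous (integ h : weakM1 R X -> R).
Proof.
move=> x.
have H : nbhs (x : weakM1 R X) --> (x : initial_topology (integ h)).
  have [H1 _] := @cvg_sup _ _ (fun h : bmfun R X => Topological.class (initial_topology (integ h))) (nbhs (x : weakM1 R X)) x (@nbhs_filter (weakM1 R X) x).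
  exact: (H1 (@cvg_id _ _) h).
apply: cvg_trans; last exact: (@initial_continuous _ _ (integ h) x).
exact: cvg_app H.
Qed.

Definition indbm (R : realType) (X : ptopologicalType) (A : set (borelX X))
  (mA : measurable A) : bmfun R X.
Proof.
exists (\1_A : borelX X -> R); split.
  exact: measurable_indic.
exists 1 => x; rewrite indicE; case: (x \in A) => /=; rewrite ?normr1 ?normr0 //.
Defined.

Lemma fin_PA (R : realType) (X : ptopologicalType) (P : M1 R X) (A : set (borelX X)) :
  measurable A -> (sval P A) \is a fin_num.
Proof. by move=> mA; apply: fin_num_measure. Qed.

Lemma cont_PA (R : realType) (X : ptopologicalType) (A : set (borelX X)) :
  measurable A -> continuous (fun P : weakM1 R X => fine (sval (P : M1 R X) A)).
Proof.
move=> mA.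
have -> : (fun P : weakM1 R X => fine (sval (P : M1 R X) A)) = integ (@indbm R X A mA).
  apply: funext => P; rewrite /integ /=.
  by rewrite integral_indic // setIT.
exact: integ_cont.
Qed.

Theorem mainTheorem4 (R : realType) (X : ptopologicalType) :
  hausdorff_space X ->
  hausdorff_space (weakM1 R X) ->
  (forall A : set (borelX X), measurable A ->
     measurable_fun [set: borelM1 R X] (fun P : borelM1 R X => sval (P : M1 R X) A)) ->
  forall Pi : probability (borelM1 R X) R,
    closed [set P : weakM1 R X | sval (P : M1 R X) `<< mean_measure Pi] /\
    supp Pi `<=` [set P : weakM1 R X | sval (P : M1 R X) `<< mean_measure Pi].
Proof.
move=> _ _ hmeas Pi; split.
  have -> : [set P : weakM1 R X | sval (P : M1 R X) `<< mean_measure Pi] =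
     \bigcap_(A in [set A : set (borelX X) | measurable A /\ (mean_measure Pi).-null_set A])
        ((fun P : weakM1 R X => fine (sval (P : M1 R X) A)) @^-1` [set 0]).
    apply/seteqP; split => P /=.
      move=> dom A [mA nA] /=.
      by rewrite (dom A nA A mA (@subset_refl _ _)).
    move=> H N nN A mA AN.
    have nA : (mean_measure Pi).-null_set A.
      by apply: subset_null_set nN.
    have := H A (conj mA nA); rewrite /= => h.
    by rewrite -(fineK (@fin_PA R X P A mA)) h.
  apply: closed_bigI => A [mA _].
  apply: preimage_closed; last exact: closed_eq.
  by move=> P _; apply: cont_PA.
move=> P suppP N nN A mA AN.
have GA : mean_measure Pi A = 0%E := nN A mA AN.
apply/eqP; apply/negPn/negP => PA0.
have PAge0 : (0 <= sval P A)%E by apply: measure_ge0.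
have PApos : 0 < fine (sval P A).
  rewrite -lte_fin fineK ?fin_PA // lt_neqAle eq_sym PA0 /=; exact: PAge0.
pose U := (fun Q : weakM1 R X => fine (sval (Q : M1 R X) A)) @^-1` [set x | x > 0].
have oU : open U.
  apply: open_comp; last exact: open_gt.
  by move=> Q _; apply: cont_PA.
have PiU := suppP U oU PApos.
have : ae_eq Pi setT (fun Q : borelM1 R X => sval (Q : M1 R X) A) (cst 0%E).
  apply/ae_eq_integral_abs => //; first exact: hmeas.
  rewrite -GA /mean_measure; apply: eq_integral => Q _.
  by rewrite gee0_abs //; apply: measure_ge0.
move=> [M [mM PiM0 sub]].
have mU : measurable (U : set (borelM1 R X)) by apply: sub_gen_smallest.
have UM : (U : set (borelM1 R X)) `<=` M.
  move=> Q UQ; apply: sub => /= H; have := H I.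
  move: UQ; rewrite /U /= => + QA0; rewrite QA0 /= ltxx //.
have := le_measure Pi (mem_set mU) (mem_set mM) UM.
move=> le; have le2 : (Pi U <= Pi M)%E := le; rewrite PiM0 in le2; by have := lt_le_trans PiU le2; rewrite ltxx.
Qed.
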